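(* Let $n\ge1$, $1\le i\le n$, and let $\mathfrak{g}$ be of type $B_n$. Then \[ \widetilde{\operatorname{ps}}(\widetilde\omega_i)=\begin{bmatrix}2n+1\\ i\end{bmatrix}_q. \]
   Context: For type $B_n$: $\widetilde\omega_i=\omega_i=\epsilon_1+\cdots+\epsilon_i$ for $1\le i<n$ and $\widetilde\omega_n=2\omega_n=\epsilon_1+\cdots+\epsilon_n$. The principal specialization $\operatorname{ps}(\lambda)$ is $\operatorname{ch}V(\lambda)$ with $x_j=q^j$ substituted, and $\widetilde{\operatorname{ps}}(\lambda)=q^{-\eta}\operatorname{ps}(\lambda)$ with $\eta$ the lowest exponent of $q$ in $\operatorname{ps}(\lambda)$. $\begin{bmatrix}a\\ b\end{bmatrix}_q$ is the Gaussian binomial coefficient. *)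

(* Defs.v *)
From HB Require Import structures.
From mathcomp Require Import all_boot all_order all_fingroup all_algebra.
Unset Strict Implicit.
Unset Printing Implicit Defensive.
Import GRing.Theory Num.Theory.
Local Open Scope ring_scope.

(* The field of rational functions Q(t), where t plays the role of q^(1/2). *)
Definition F : fieldType := {fraction {poly rat}}.
Definition tq : F := tofrac ('X : {poly rat}).
Definition qq : F := tq ^+ 2.

Definition evq (p : {poly rat}) : F := (map_poly (fun c : rat => tofrac (c%:P)) p).[qq].

(* Type B_n weights are written in the epsilon basis, with DOUBLED coordinates
   (so that half-integral weights such as rho are integral):
   m : 'I_n -> int represents mu = sum_k (m k / 2) eps_(k+1).
   Under the principal specialization x_j = q^j, the monomial x^mu becomes
   q^(sum_j j mu_j) = t^(sum_k (k+1) * m k). *)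

(* Specialized Weyl alternant  A_mu(x_j = q^j) = sum_{w in W(B_n)} sgn(w) x^(w mu),
   W(B_n) = signed permutations (s, e): (w mu)_{s k} = (-1)^(e k) mu_k,
   sgn(w) = sgn(s) * (-1)^#{k | e k}. *)
Definition altB (n : nat) (m : 'I_n -> int) : F :=
  \sum_(s : 'S_n) \sum_(e : {ffun 'I_n -> bool})
    (-1) ^+ (odd_perm s + #|[set k | e k]|)%N *
    tq ^ (\sum_(k < n) (((s k : nat).+1)%:Z * (-1) ^+ (e k : nat) * m k)).

Definition rho2 (n : nat) : 'I_n -> int := fun k => (2 * (n - k) - 1)%N%:Z.

Definition omega_tilde2 (n i : nat) : 'I_n -> int :=
  fun k => if (k < i)%N then 2%:Z else 0%:Z.

(* Principal specialization of ch V(lambda) (Weyl character formula):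
   ps(lambda) = A_(lambda+rho) / A_rho  evaluated at x_j = q^j. *)
Definition psB (n : nat) (lam2 : 'I_n -> int) : F :=
  altB n (fun k => lam2 k + rho2 n k) / altB n (rho2 n).

Definition lowest_q_exponent (f : F) (e : int) : Prop :=
  exists p : {poly rat}, p`_0 != 0 /\ f = qq ^ e * evq p.

Definition ps_tilde (f : F) (eta : int) : F := qq ^ (- eta) * f.

Definition gauss_binom (a b : nat) : F :=
  \prod_(k < b) ((1 - qq ^+ (a - k)) / (1 - qq ^+ k.+1)).

(* Main.v *)
Require Import Defs.
From mathcomp Require Import all_boot all_order all_fingroup all_algebra.
From mathcomp Require Import zify ring.
Import GRing.Theory Num.Theory.
Local Open Scope ring_scope.

Lemma tq_neq0 : tq != 0.
Proof. by rewrite /tq tofrac_eq0 polyX_eq0. Qed.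

Lemma prod_exprz (I : finType) (P : pred I) (G : I -> int) :
  \prod_(k | P k) tq ^ (G k) = tq ^ (\sum_(k | P k) G k).
Proof.
elim/big_rec2: _ => [|k a b _ ->]; first by rewrite expr0z.
by rewrite expfzDr // tq_neq0.
Qed.

Definition Mz n (m : 'I_n -> int) : 'M[F]_n :=
  \matrix_(k, j) (tq ^ ((j : nat).+1%:Z * m k) - tq ^ (- ((j : nat).+1%:Z * m k))).

Arguments Mz {n}.

Lemma altB_det n m : altB n m = \det (Mz m).
Proof.
rewrite /altB /determinant; apply: eq_bigr => s _.
have E : forall k, Mz m k (s k) = \sum_(b : bool) (-1) ^+ b * tq ^ ((-1) ^+ b * ((s k : nat).+1%:Z * m k)).
  move=> k; rewrite big_bool /= !mxE expr1 expr0 mul1r mulN1r mulN1r mul1r addrC.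
  by [].
rewrite (eq_bigr _ (fun k _ => E k)).
rewrite bigA_distr_bigA mulr_sumr; apply: eq_bigr => e _.
rewrite big_split /= prodrXr prod_exprz exprD -mulrA; congr (_ * (_ * _)).
  congr (_ ^+ _); rewrite -sum1_card (big_mkcond (fun k => k \in _)) /=.
  by apply: eq_bigr => k _; rewrite inE; case: (e k).
congr (_ ^ _); apply: eq_bigr => k _.
by rewrite mulrCA mulrA.
Qed.

Fixpoint Ucp (j : nat) : {poly F} * {poly F} :=
  match j with
  | 0 => (1, 'X)
  | j'.+1 => ((Ucp j').2, 'X * (Ucp j').2 - (Ucp j').1)
  end.
Definition Uch j := (Ucp j).1.

Lemma Uch0 : Uch 0 = 1. Proof. by []. Qed.
Lemma Uch1 : Uch 1 = 'X. Proof. by []. Qed.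
Lemma UchSS j : Uch j.+2 = 'X * Uch j.+1 - Uch j. Proof. by []. Qed.

Definition Pcoef j := (Uch j)`_j = 1 /\ forall r, (j < r)%N -> (Uch j)`_r = 0.

Lemma Uch_coef j0 : Pcoef j0.
Proof.
suff H : forall j, Pcoef j /\ Pcoef j.+1 by case: (H j0).
elim=> [|j [[IH1 IH2] [IH3 IH4]]].
  split; split.
  - by rewrite Uch0 coefC.
  - by move=> r hr; rewrite Uch0 coefC; case: r hr.
  - by rewrite Uch1 coefX.
  - by move=> r hr; rewrite Uch1 coefX; case: r hr => // -[].
split; first by split.
split.
  by rewrite UchSS coefB coefXM /= IH3 IH2 // subr0.
move=> r hr; rewrite UchSS coefB coefXM.
case: r hr => // r hr /=.
rewrite IH4 // IH2 ?subr0 //; lia.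
Qed.

Lemma Uch_size j : (size (Uch j) <= j.+1)%N.
Proof. by apply/leq_sizeP => r hr; case: (Uch_coef j) => _ ->. Qed.

Lemma a1 (R : fieldType) (x : R) : x != 0 -> (x - x^-1) * (x + x^-1) = x ^+ 2 - (x ^+ 2)^-1.
Proof. move=> hx. rewrite expr2. field. by []. Qed.
Lemma a2 (R : fieldType) (x u v : R) (n : nat) : x != 0 ->
  (x - x^-1) * u = x ^+ n.+1 - (x ^+ n.+1)^-1 ->
  (x - x^-1) * v = x ^+ n.+2 - (x ^+ n.+2)^-1 ->
  (x - x^-1) * ((x + x^-1) * v - u) = x ^+ n.+3 - (x ^+ n.+3)^-1.
Proof.
move=> hx e1 e2. rewrite mulrBr mulrCA e2 e1 !exprS. field.
by rewrite expf_neq0 // hx.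
Qed.

Lemma Uch_eval (x : F) j : x != 0 ->
  (x - x^-1) * (Uch j).[x + x^-1] = x ^+ j.+1 - (x ^+ j.+1)^-1.
Proof.
move=> hx.
suff H : forall j, (x - x^-1) * (Uch j).[x + x^-1] = x ^+ j.+1 - (x ^+ j.+1)^-1 /\
   (x - x^-1) * (Uch j.+1).[x + x^-1] = x ^+ j.+2 - (x ^+ j.+2)^-1 by case: (H j).
elim=> [|i [IH1 IH2]].
  rewrite Uch0 Uch1 hornerC hornerX mulr1 expr1 a1 //.
split=> //.
rewrite UchSS hornerD hornerN hornerM hornerX; exact: a2.
Qed.

Lemma detC n (X : 'I_n -> F) : (forall k, X k != 0) ->
  \det (\matrix_(k, j) (X k ^+ (j : nat).+1 - (X k ^+ (j : nat).+1)^-1)) =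
  (\prod_k (X k - (X k)^-1)) *
  \prod_(k < n) \prod_(l < n | (k < l)%N) ((X l + (X l)^-1) - (X k + (X k)^-1)).
Proof.
move=> hX.
pose sv : 'rV[F]_n := \row_k (X k + (X k)^-1).
pose L : 'M[F]_n := \matrix_(j, r) (Uch j)`_r.
have -> : (\matrix_(k, j) (X k ^+ (j : nat).+1 - (X k ^+ (j : nat).+1)^-1)) =
    diag_mx (\row_k (X k - (X k)^-1)) *m (L *m Vandermonde n sv)^T.
  apply/matrixP => k j; rewrite mul_diag_mx !mxE -Uch_eval //; apply: congr1.
  rewrite (horner_coef_wide _ (leq_trans (Uch_size j) (ltn_ord j))).
  by apply: eq_bigr => r _; rewrite !mxE.
rewrite det_mulmx det_diag det_tr det_mulmx det_Vandermonde det_trig.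
  have HL : \prod_(i < n) L i i = 1.
    by apply: big1 => i _; rewrite mxE; case: (Uch_coef i).
  rewrite HL mul1r.
  congr (_ * _); first by apply: eq_bigr => i _; rewrite mxE.
  by apply: eq_bigr => i _; apply: eq_bigr => l _; rewrite !mxE.
apply/is_trig_mxP => i j hij; rewrite mxE.
by case: (Uch_coef i) => _ ->.
Qed.

Definition u (a : nat) : F := tq ^+ a.
Definition hh (r : nat) : F := tq ^+ (2 * r) - 1.
Definition fA (a : nat) : F := u (2 * a + 1) - (u (2 * a + 1))^-1.
Definition sA (a : nat) : F := u (2 * a + 1) + (u (2 * a + 1))^-1.
Definition Pi n (al : nat -> nat) : F :=
  (\prod_(k < n) fA (al k)) *
  \prod_(k < n) \prod_(l < n | (k < l)%N) (sA (al l) - sA (al k)).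
Definition aln n i k := (n - k.+1 + (k < i))%N.

Lemma u_neq0 a : u a != 0.
Proof. by rewrite expf_neq0 // tq_neq0. Qed.

Lemma altB_Pi n (al : nat -> nat) (m : 'I_n -> int) :
  (forall k : 'I_n, m k = (2 * al k + 1)%N%:Z) -> altB n m = Pi n al.
Proof.
move=> hm; rewrite altB_det.
have -> : Mz m = \matrix_(k, j) (u (2 * al k + 1) ^+ (j : nat).+1
                             - (u (2 * al k + 1) ^+ (j : nat).+1)^-1).
  apply/matrixP => k j; rewrite !mxE hm -PoszM -exprnN /u -exprM mulnC.
  by [].
rewrite (@detC n (fun k => u (2 * al k + 1))); last by move=> k; exact: u_neq0.
by [].
Qed.

Lemma m_lam n i (k : 'I_n) :
  omega_tilde2 n i k + rho2 n k = (2 * aln n i k + 1)%N%:Z.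
Proof.
rewrite /omega_tilde2 /rho2 /aln; have := ltn_ord k.
case: ifP => hk hkn; rewrite ?add0r -?PoszD; congr Posz; rewrite /=; lia.
Qed.

Lemma m_rho n (k : 'I_n) : rho2 n k = (2 * aln n 0 k + 1)%N%:Z.
Proof.
rewrite /rho2 /aln; have := ltn_ord k; move=> hkn; congr Posz; rewrite addn0; lia.
Qed.

Lemma hh_neq0 r : (0 < r)%N -> hh r != 0.
Proof.
move=> hr; rewrite /hh subr_eq0 /tq -rmorphXn /= -tofrac1 tofrac_eq.
apply/negP => /eqP H; have := congr1 (fun p : {poly rat} => size p) H; rewrite size_polyXn size_poly1; case: r hr {H} => // r _.
Qed.

Lemma b1 (R : fieldType) (A : R) : A != 0 -> A - A^-1 = A^-1 * (A ^+ 2 - 1).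
Proof. move=> hA; rewrite expr2; field; exact: hA. Qed.

Lemma b2 (R : fieldType) (A B C D : R) : A != 0 -> B != 0 -> C * B = A -> D = A * B ->
  (B + B^-1) - (A + A^-1) = - A^-1 * (C - 1) * (D - 1).
Proof.
move=> hA hB hC ->; have -> : C = A / B by rewrite -hC mulfK.
field; by rewrite hA hB.
Qed.

Lemma fA_hh a : fA a = (u (2 * a + 1))^-1 * hh (2 * a + 1).
Proof. rewrite /fA b1 ?u_neq0 // /hh /u -exprM. by rewrite [(_ * 2)%N]mulnC. Qed.

Lemma sA_diff b a : (b <= a)%N ->
  sA b - sA a = - (u (2 * a + 1))^-1 * hh (a - b) * hh (a + b + 1).
Proof.
move=> hba; rewrite /sA /hh; apply: b2; rewrite ?u_neq0 // /u -exprD.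
  by congr (_ ^+ _); lia.
by congr (_ ^+ _); lia.
Qed.

Lemma big_peel_cond n (P : nat -> bool) (G : nat -> F) :
  \prod_(l < n.+1 | P l) G l = (if P 0%N then G 0%N else 1) * \prod_(l < n | P l.+1) G l.+1.
Proof.
rewrite big_mkcond big_ord_recl /=; congr (_ * _).
by rewrite [RHS]big_mkcond; apply: eq_bigr => i _.
Qed.

Lemma big_peel n (G : nat -> F) :
  \prod_(l < n.+1) G l = G 0%N * \prod_(l < n) G l.+1.
Proof.
by rewrite big_ord_recl; congr (_ * _); apply: eq_bigr => i _; rewrite lift0.
Qed.

Lemma Pi_peel n al :
  Pi n.+1 al = (fA (al 0%N) * \prod_(l < n) (sA (al l.+1) - sA (al 0%N))) *
               Pi n (fun k => al k.+1).
Proof.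
rewrite /Pi (big_peel n (fun k => fA (al k))).
rewrite (big_peel n (fun k => \prod_(l < n.+1 | (k < l)%N) (sA (al l) - sA (al k)))).
rewrite (big_peel_cond n (fun l => (0 < l)%N) (fun l => sA (al l) - sA (al 0%N))) /= mul1r.
have -> : \prod_(l < n) \prod_(l0 < n.+1 | (l.+1 < l0)%N) (sA (al l0) - sA (al l.+1)) =
   \prod_(k < n) \prod_(l < n | (k < l)%N) (sA (al l.+1) - sA (al k.+1)).
  apply: eq_bigr => k _.
  by rewrite (big_peel_cond n (fun l => (k.+1 < l)%N) (fun l => sA (al l) - sA (al k.+1))) /= mul1r.
rewrite -!mulrA; congr (_ * _); rewrite mulrCA; congr (_ * _).
Qed.

Lemma alnSS n i l : aln n.+1 i.+1 l.+1 = aln n i l. Proof. by []. Qed.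
Lemma alnS0 n l : aln n.+1 0 l.+1 = aln n 0 l. Proof. by []. Qed.

Lemma big_recr_nat n (G : nat -> F) :
  \prod_(l < n.+1) G l = (\prod_(l < n) G l) * G n.
Proof. by rewrite big_ord_recr. Qed.

Lemma prod_ins n i (G : nat -> F) : (i <= n)%N ->
  (\prod_(l < n) G (aln n i l)) * G (n - i)%N = \prod_(b < n.+1) G b.
Proof.
elim: n i => [|n IH] i hi.
  by move: hi; rewrite leqn0 => /eqP ->; rewrite big_ord0 big_peel big_ord0 mul1r mulr1.
rewrite (big_peel n (fun l => G (aln n.+1 i l))) big_recr_nat.
case: i hi => [|i] hi.
  have -> : aln n.+1 0 0 = n by rewrite /aln /=; lia.
  rewrite (eq_bigr (fun l : 'I_n => G (aln n 0 l))) //.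
  by rewrite subn0 -(IH 0%N) // subn0 [G n * _]mulrC.
have -> : aln n.+1 i.+1 0 = n.+1 by rewrite /aln subn1 /= addn1.
rewrite (eq_bigr (fun l : 'I_n => G (aln n i l))) //.
by rewrite subSS -mulrA IH // mulrC.
Qed.

Lemma c1 (R : comRingType) (c h s Q : R) n :
  c * h * (s * (c ^+ n * Q)) = s * c ^+ n.+1 * h * Q.
Proof. rewrite exprS; ring. Qed.

Lemma Pk_formula n (A : nat) (bl : nat -> nat) :
  (forall l, (l < n)%N -> (bl l <= A)%N) ->
  fA A * \prod_(l < n) (sA (bl l) - sA A) =
  (-1) ^+ n * (u (2 * A + 1))^-1 ^+ n.+1 * hh (2 * A + 1) *
  ((\prod_(l < n) hh (A - bl l)) * \prod_(l < n) hh (A + bl l + 1)).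
Proof.
move=> hbl; rewrite fA_hh.
rewrite (eq_bigr (fun l : 'I_n => - ((u (2 * A + 1))^-1 * (hh (A - bl l) * hh (A + bl l + 1))))).
  by rewrite prodrN prodrMl big_split /= card_ord c1.
by move=> l _; rewrite sA_diff ?hbl // !mulNr mulrA.
Qed.

Lemma final_alg (R : fieldType) (s W0 W1 U1 U2 U3 U4 H2n3 H2n1 Hn1 Hi1 H2n2 H2n2i
    a0 b0 a1 b1 Pin_i Pin_0 Dni Nun Nun1 : R) :
  U1 != 0 -> U3 != 0 -> U4 != 0 -> Dni != 0 -> Hi1 != 0 -> Hn1 != 0 -> H2n2i != 0 ->
  W1 * U1 * U4 = W0 * U2 * U3 ->
  a1 * Hi1 = Hn1 * a0 ->
  b1 * H2n2i * Hn1 = H2n1 * H2n2 * b0 ->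
  Pin_i * U3 * Dni = Pin_0 * U4 * Nun ->
  Nun1 * (- H2n2i) = (- H2n3) * (- H2n2) * Nun ->
  (s * W1 * H2n3 * (a1 * b1)) * Pin_i * U1 * (Dni * (- Hi1)) =
  (s * W0 * H2n1 * (a0 * b0)) * Pin_0 * U2 * Nun1.
Proof.
move=> nU1 nU3 nU4 nD nHi nHn nH2 eW ea eb eP eN.
have -> : W1 = W0 * U2 * U3 / (U1 * U4) by rewrite -eW; field; rewrite nU1 nU4.
have -> : a1 = Hn1 * a0 / Hi1 by rewrite -ea mulfK.
have -> : b1 = H2n1 * H2n2 * b0 / (H2n2i * Hn1) by rewrite -eb; field; rewrite nH2 nHn.
have -> : Pin_i = Pin_0 * U4 * Nun / (U3 * Dni) by rewrite -eP; field; rewrite nU3 nD.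
have -> : Nun1 = (- H2n3) * (- H2n2) * Nun / (- H2n2i) by rewrite -eN mulfK // oppr_eq0.
field; by rewrite oppr_eq0 nU1 nU3 nU4 nD nHi nHn nH2.
Qed.

Lemma w_alg (R : fieldType) (X Y U1 U2 U3 U4 : R) : X != 0 -> Y != 0 -> U4 != 0 ->
  X * U2 * U3 = Y * U1 * U4 -> X^-1 * U1 * U4 = Y^-1 * U2 * U3.
Proof.
move=> hX hY hU e.
have -> : U1 = X * U2 * U3 / (Y * U4) by rewrite e; field; rewrite hY hU.
field; by rewrite hX hY hU.
Qed.

Definition Dn i : F := \prod_(k < i) (1 - qq ^+ k.+1).
Definition Nu n i : F := \prod_(k < i) (1 - qq ^+ (2 * n + 1 - k)).

Lemma qq_hh r : 1 - qq ^+ r = - hh r.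
Proof. by rewrite /hh /qq -exprM opprB. Qed.

Lemma aln_le n i l : (l < n)%N -> (aln n i l <= n)%N.
Proof. by rewrite /aln; case: (l < i)%N => /=; lia. Qed.

Lemma Dn_neq0 i : Dn i != 0.
Proof.
rewrite /Dn; apply/prodf_neq0 => k _; rewrite qq_hh oppr_eq0 hh_neq0 //.
Qed.

Lemma DnS i : Dn i.+1 = Dn i * - hh i.+1.
Proof. by rewrite /Dn (big_recr_nat i (fun k => 1 - qq ^+ k.+1)) qq_hh. Qed.

Lemma NuS n i : (i <= n)%N ->
  Nu n.+1 i.+1 * (1 - qq ^+ (2 * n + 2 - i)) =
  (1 - qq ^+ (2 * n.+1 + 1)) * (1 - qq ^+ (2 * n + 2)) * Nu n i.
Proof.
move=> hi; pose W k := 1 - qq ^+ (2 * n + 2 - k).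
rewrite /Nu (big_peel i (fun k => 1 - qq ^+ (2 * n.+1 + 1 - k))) subn0.
have -> : \prod_(k < i) (1 - qq ^+ (2 * n.+1 + 1 - k.+1)) = \prod_(k < i) W k.
  by apply: eq_bigr => k _; rewrite /W; congr (_ - _ ^+ _); lia.
have -> : \prod_(k < i) (1 - qq ^+ (2 * n + 1 - k)) = \prod_(k < i) W k.+1.
  by apply: eq_bigr => k _; rewrite /W; congr (_ - _ ^+ _); lia.
have -> : 1 - qq ^+ (2 * n + 2 - i) = W i by [].
have -> : 1 - qq ^+ (2 * n + 2) = W 0%N by rewrite /W subn0.
by rewrite -mulrA -(big_recr_nat i W) (big_peel i W) mulrA.
Qed.

Lemma KEY n i : (i <= n)%N ->
  Pi n (aln n i) * u (2 * n * i) * Dn i = Pi n (aln n 0) * u (i * (i - 1)) * Nu n i.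
Proof.
elim: n i => [|n IH] [|i] hi //.
- by rewrite /Dn /Nu !big_ord0 !muln0.
- by rewrite /Dn /Nu !big_ord0 !muln0.
have e1 : aln n.+1 i.+1 0 = n.+1 by rewrite /aln subn1 /= addn1.
have e0 : aln n.+1 0 0 = n by rewrite /aln /=; lia.
rewrite Pi_peel (Pi_peel n (aln n.+1 0)) e1 e0.
change (Pi n (fun k => aln n.+1 i.+1 k.+1)) with (Pi n (aln n i)).
change (Pi n (fun k => aln n.+1 0 k.+1)) with (Pi n (aln n 0)).
rewrite (@Pk_formula n n.+1 (aln n i)); last first.
  by move=> l hl; apply: leq_trans (aln_le n i l hl) (leqnSn n).
rewrite (@Pk_formula n n (aln n 0)); last first.
  by move=> l hl; apply: aln_le.
rewrite DnS.
apply: (@final_alg F _ _ _ _ _ (u (2 * n * i)) (u (i * (i - 1))) _ _ (hh n.+1) _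
   (hh (2 * n + 2)) (hh (2 * n + 2 - i)) _ _ _ _ _ _ _ (Nu n i)).
- exact: u_neq0.
- exact: u_neq0.
- exact: u_neq0.
- exact: Dn_neq0.
- exact: hh_neq0.
- exact: hh_neq0.
- by apply: hh_neq0; lia.
- rewrite !exprVn /u -!exprM; apply: w_alg; rewrite ?expf_neq0 ?tq_neq0 //.
  rewrite -!exprD; congr (_ ^+ _).
  clear e1 IH; case: i hi => [|i] hi /=; nia.
- have E1 := prod_ins n i (fun b => hh (n.+1 - b)) hi.
  have E2 := prod_ins n n (fun b => hh (n.+1 - b)) (leqnn n).
  rewrite /= (_ : (n.+1 - (n - i) = i.+1)%N) in E1; last by lia.
  rewrite /= subnn subn0 in E2.
  rewrite E1 -E2 mulrC; congr (_ * _); apply: eq_bigr => l _; congr hh.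
  by rewrite /aln ltn_ord /=; have := ltn_ord l; lia.
- pose Q := \prod_(b < n.+1) hh (n.+1 + b + 1).
  have E1 := prod_ins n i (fun b => hh (n.+1 + b + 1)) hi.
  rewrite /= (_ : (n.+1 + (n - i) + 1 = 2 * n + 2 - i)%N) in E1; last by lia.
  have E2 := prod_ins n.+1 0 (fun b => hh (n + b + 1)) (leq0n _).
  rewrite /= (big_peel n (fun l => hh (n + aln n.+1 0 l + 1)))
     (big_peel n.+1 (fun b => hh (n + b + 1))) e0 in E2.
  have E2' : hh (2 * n + 1) * \prod_(l < n) hh (n + aln n 0 l + 1) * hh (2 * n + 2) =
             hh n.+1 * Q.
    have -> : Q = \prod_(b < n.+1) hh (n + b.+1 + 1).
      by rewrite /Q; apply: eq_bigr => b _; congr hh; lia.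
    rewrite (_ : hh n.+1 = hh (n + 0 + 1)); last by rewrite addn0 addn1.
    rewrite -E2; congr (_ * _ * hh _); [congr hh; lia | lia].
  by rewrite E1 mulrC -E2' mulrAC.
- exact: IH.
- by have := NuS n i hi; rewrite !qq_hh.
Qed.


Fixpoint gp (a b : nat) {struct a} : {poly rat} :=
  match a, b with
  | _, 0 => 1
  | 0, _.+1 => 0
  | a'.+1, b'.+1 => gp a' b' + 'X^(b'.+1) * gp a' b'.+1
  end.

Lemma gp_coef0 a b : (b <= a)%N -> (gp a b)`_0 = 1.
Proof.
elim: a b => [|a IH] [|b] hb //=; try by rewrite coefC.
by rewrite coefD coefXnM /= IH // addr0.
Qed.

Definition phi : {rmorphism rat -> F} := ((@tofrac _) \o (@polyC rat))%FUN.
Lemma evq_phi p : evq p = (map_poly phi p).[qq].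
Proof. by []. Qed.
Lemma evq_add p r : evq (p + r) = evq p + evq r.
Proof. by rewrite !evq_phi rmorphD hornerD. Qed.
Lemma evq_mul p r : evq (p * r) = evq p * evq r.
Proof. by rewrite !evq_phi rmorphM hornerM. Qed.
Lemma evq_Xn k : evq 'X^k = qq ^+ k.
Proof. by rewrite evq_phi map_polyXn hornerXn. Qed.
Lemma evq_1 : evq 1 = 1.
Proof. by rewrite evq_phi rmorph1 hornerC. Qed.
Lemma evq_0 : evq 0 = 0.
Proof. by rewrite evq_phi rmorph0 horner0. Qed.

Definition Nq a b : F := \prod_(k < b) (1 - qq ^+ (a - k)).

Lemma qq_neq0 : qq != 0.
Proof. by rewrite expf_neq0 // tq_neq0. Qed.

Lemma one_sub_qq_neq0 r : (0 < r)%N -> 1 - qq ^+ r != 0.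
Proof. by move=> hr; rewrite qq_hh oppr_eq0 hh_neq0. Qed.

Lemma gaussE a b : gauss_binom a b = Nq a b / Dn b.
Proof. by rewrite /gauss_binom big_split /= prodfV. Qed.

Lemma Nq_zero a b : (a < b)%N -> Nq a b = 0.
Proof.
move=> hab; apply/eqP/prodf_eq0; exists (Ordinal hab) => //=.
by rewrite subnn expr0 subrr.
Qed.

Lemma d1 (R : fieldType) (N D Qb Qab : R) : D != 0 -> 1 - Qb != 0 ->
  (1 - Qb * Qab) * N / (D * (1 - Qb)) = N / D + Qb * (N * (1 - Qab) / (D * (1 - Qb))).
Proof. move=> hD hQ; field; by rewrite hD hQ. Qed.

Lemma gauss_pascal a b :
  gauss_binom a.+1 b.+1 = gauss_binom a b + qq ^+ b.+1 * gauss_binom a b.+1.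
Proof.
rewrite !gaussE DnS -qq_hh.
have -> : Nq a.+1 b.+1 = (1 - qq ^+ a.+1) * Nq a b.
  by rewrite /Nq (big_peel b (fun k => 1 - qq ^+ (a.+1 - k))).
have -> : Nq a b.+1 = Nq a b * (1 - qq ^+ (a - b)).
  by rewrite /Nq (big_recr_nat b (fun k => 1 - qq ^+ (a - k))).
case: (leqP b a) => hab.
  have -> : qq ^+ a.+1 = qq ^+ b.+1 * qq ^+ (a - b) by rewrite -exprD; congr (_ ^+ _); lia.
  by rewrite d1 // ?Dn_neq0 ?one_sub_qq_neq0.
by rewrite Nq_zero // !(mulr0, mul0r, addr0).
Qed.

Lemma evq_gp a b : evq (gp a b) = gauss_binom a b.
Proof.
elim: a b => [|a IH] [|b] /=.
- by rewrite evq_1 /gauss_binom big_ord0.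
- by rewrite evq_0 gaussE Nq_zero // mul0r.
- by rewrite evq_1 /gauss_binom big_ord0.
- by rewrite evq_add evq_mul evq_Xn !IH gauss_pascal.
Qed.

Lemma Pi_rho_neq0 n : Pi n (aln n 0) != 0.
Proof.
rewrite /Pi mulf_neq0 //; apply/prodf_neq0 => k _.
  by rewrite fA_hh mulf_neq0 ?invr_eq0 ?u_neq0 // hh_neq0 //; lia.
apply/prodf_neq0 => l hkl.
have hk := ltn_ord k; have hl := ltn_ord l.
rewrite sA_diff; last by rewrite /aln /=; lia.
rewrite !mulf_neq0 ?oppr_eq0 ?invr_eq0 ?u_neq0 // hh_neq0 //; rewrite /aln /=; lia.
Qed.

Lemma two_bin2 i : (2 * 'C(i, 2) = i * (i - 1))%N.
Proof.
elim: i => [|i IH] //.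
rewrite binS bin1 mulnDr IH; case: i {IH} => [|i] //=; nia.
Qed.

Lemma e_alg (R : fieldType) (Pi_i Pi0 U3 U4 D Nu : R) : Pi0 != 0 -> U3 != 0 -> D != 0 ->
  Pi_i * U3 * D = Pi0 * U4 * Nu -> Pi_i / Pi0 = U4 / U3 * (Nu / D).
Proof.
move=> h0 h3 hD e.
have -> : Pi_i = Pi0 * U4 * Nu / (U3 * D) by rewrite -e; field; rewrite h3 hD.
field; by rewrite h0 h3 hD.
Qed.

Theorem proposition5p26 (n i : nat) (hn : (1 <= n)%N) (hi1 : (1 <= i)%N)
    (hin : (i <= n)%N) :
  exists eta : int,
    lowest_q_exponent (psB n (omega_tilde2 n i)) eta /\
    ps_tilde (psB n (omega_tilde2 n i)) eta = gauss_binom (2 * n + 1) i.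
Proof.
have hPsi : psB n (omega_tilde2 n i) = Pi n (aln n i) / Pi n (aln n 0).
  rewrite /psB (altB_Pi n (aln n i) _ (m_lam n i)) (altB_Pi n (aln n 0) _ (m_rho n)) //.
have K := KEY n i hin.
have hG : gauss_binom (2 * n + 1) i = Nu n i / Dn i by rewrite gaussE.
pose eta : int := ('C(i, 2))%:Z - (n * i)%:Z.
have hq : qq ^ eta = u (i * (i - 1)) / u (2 * n * i).
  rewrite /eta expfzDr ?qq_neq0 // -exprnN; change (qq ^ Posz (binomial i 2)) with (qq ^+ binomial i 2).
  rewrite /qq /u -!exprM two_bin2 mulnA.
  by [].
have hps : psB n (omega_tilde2 n i) = qq ^ eta * gauss_binom (2 * n + 1) i.
  rewrite hPsi hq hG; apply: e_alg K; rewrite ?Pi_rho_neq0 ?u_neq0 ?Dn_neq0 //.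
exists eta; split.
  exists (gp (2 * n + 1) i); split.
    by rewrite gp_coef0 ?oner_neq0 //; lia.
  by rewrite evq_gp.
by rewrite /ps_tilde hps mulrA -expfzDr ?qq_neq0 // addNr expr0z mul1r.
Qed.
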